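(* Assume $J$ satisfies (J1), (J2), (J3), (J4) and $h$ satisfies (h1), (h2). For $\ell\in\mathbb N$ let $\psi^{(\ell)}$ be the configuration with $\psi^{(\ell)}_i=-1$ for $i\in Q_\ell$ and $\psi^{(\ell)}_i=1$ for $i\in\mathbb Z^d\setminus Q_\ell$. Then there is a constant $C\ge1$, depending only on $d$, $\mu$ and $\tau$, such that for every $\ell\in\mathbb N$ $$H_{Q_\ell}(\psi^{(\ell)})\le C\,\ell^{d-1}\Big(1+\sum_{m=1}^{\ell+1}\sigma(m)\Big).$$
   Context: Fix $d\ge2$, $|x|:=\sum_n|x_n|$, $|x|_\infty:=\max_n|x_n|$. Configurations are maps $u:\mathbb Z^d\to\{-1,1\}$. Given $J:\mathbb Z^d\times\mathbb Z^d\to[0,\infty)$ and $h:\mathbb Z^d\to\mathbb R$, for finite $\Gamma$: $H_\Gamma(u):=\sum_{(i,j)\in\mathbb Z^{2d}\setminus(\mathbb Z^d\setminus\Gamma)^2}J_{ij}(1-u_iu_j)+\sum_{i\in\Gamma}h_iu_i$. $Q_\ell:=\{i\in\mathbb Z^d:|i|_\infty\le\ell\}$. Conditions (constants $\Lambda\ge\lambda>0$, $\mu>0$, $\tau\in\mathbb N$): (J1) $J_{ij}=J_{ji}$; (J2) $J_{ii}=0$; (J3) $J_{ij}\ge\lambda$ if $|i-j|=1$; (J4) $\sum_jJ_{ij}\le\Lambda$ for all $i$; (h1) $\sup_i|h_i|\le\mu$; (h2) $\sum_{i\in F}h_i=0$ for every fundamental domain $F$ (set of representatives) of $\mathbb Z^d/\tau\mathbb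 Z^d$. For $R\in\mathbb N$, $\sigma(R):=\sup_{i\in\mathbb Z^d}\sum_{j:\,|j-i|_\infty\ge R}J_{ij}$. *)

(* Defs.v *)
From Stdlib Require Import Reals Lra ZArith List ClassicalEpsilon.
Import ListNotations.
Open Scope R_scope.

Definition Pt := list Z.
Definition is_pt (d : nat) (x : Pt) : Prop := length x = d.

Definition vsub (x y : Pt) : Pt := map (fun p => (fst p - snd p)%Z) (combine x y).

Definition norm1 (x : Pt) : Z := fold_right (fun a s => (Z.abs a + s)%Z) 0%Z x.
Definition norminf (x : Pt) : Z := fold_right (fun a m => Z.max (Z.abs a) m) 0%Z x.

Definition inQ (l : nat) (x : Pt) : Prop := (norminf x <= Z.of_nat l)%Z.

Fixpoint cube (d l : nat) : list Pt :=
  match d with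
  | O => [ [] ]
  | S d' => flat_map (fun z => map (cons z) (cube d' l))
              (map (fun k => (Z.of_nat k - Z.of_nat l)%Z) (seq 0 (2 * l + 1)))
  end.

Definition lsum {A : Type} (f : A -> R) (L : list A) : R :=
  fold_right (fun x s => f x + s) 0 L.

(* supremum of a bounded nonempty set of reals (0 by convention otherwise) *)
Definition sup_R (A : R -> Prop) : R :=
  match excluded_middle_informative (bound A /\ exists x, A x) with
  | left H => proj1_sig (completeness A (proj1 H) (proj2 H))
  | right _ => 0
  end.

(* sum of a (nonnegative) family f over the (countable) set P:
   supremum of all finite partial sums *)
Definition nnsum {A : Type} (P : A -> Prop) (f : A -> R) : R :=
  sup_R (fun s => exists L : list A, NoDup L /\ Forall P L /\ s = lsum f L).

Definition Ham (d : nat) (J : Pt -> Pt -> R) (h : Pt -> R)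
    (G : list Pt) (u : Pt -> R) : R :=
  nnsum (fun p : Pt * Pt => is_pt d (fst p) /\ is_pt d (snd p) /\
                             (In (fst p) G \/ In (snd p) G))
        (fun p => J (fst p) (snd p) * (1 - u (fst p) * u (snd p)))
  + lsum (fun i => h i * u i) G.

Definition sigmaJ (d : nat) (J : Pt -> Pt -> R) (Rr : nat) : R :=
  sup_R (fun s => exists i, is_pt d i /\
           s = nnsum (fun j => is_pt d j /\ (Z.of_nat Rr <= norminf (vsub j i))%Z) (J i)).

Definition psi (l : nat) (x : Pt) : R :=
  if Z.leb (norminf x) (Z.of_nat l) then -1 else 1.

Definition congr_mod (tau : nat) (x y : Pt) : Prop :=
  Forall2 (fun a b => (Z.of_nat tau | a - b)%Z) x y.

Definition fund_domain (d tau : nat) (F : list Pt) : Prop :=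
  NoDup F /\ Forall (is_pt d) F /\
  forall x, is_pt d x -> exists! y, In y F /\ congr_mod tau x y.

Definition J_cond (d : nat) (lam Lam : R) (J : Pt -> Pt -> R) : Prop :=
  (forall i j, is_pt d i -> is_pt d j -> 0 <= J i j) /\
  (forall i j, is_pt d i -> is_pt d j -> J i j = J j i) /\
  (forall i, is_pt d i -> J i i = 0) /\
  (forall i j, is_pt d i -> is_pt d j -> norm1 (vsub i j) = 1%Z -> lam <= J i j) /\
  (* J4: sum_j J_ij <= Lam, i.e. every finite partial sum is <= Lam *)
  (forall i, is_pt d i -> forall L, NoDup L -> Forall (is_pt d) L -> lsum (J i) L <= Lam).

Definition h_cond (d : nat) (mu : R) (tau : nat) (h : Pt -> R) : Prop :=
  (forall i, is_pt d i -> Rabs (h i) <= mu) /\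
  (forall F, fund_domain d tau F -> lsum h F = 0).

(* Main.v *)
Require Import Defs.
From Stdlib Require Import Reals ZArith List Lia Lra Permutation ClassicalEpsilon.
Import ListNotations.
Open Scope R_scope.

Lemma lsum_app {A} (f : A -> R) l1 l2 : lsum f (l1 ++ l2) = lsum f l1 + lsum f l2.
Proof. induction l1; simpl; [lra| rewrite IHl1; lra]. Qed.

Lemma lsum_ext_in {A} (f g : A -> R) l : (forall x, In x l -> f x = g x) -> lsum f l = lsum g l.
Proof. induction l; simpl; intros H; [reflexivity|]. rewrite H, IHl; auto. Qed.

Lemma lsum_le_in {A} (f g : A -> R) l : (forall x, In x l -> f x <= g x) -> lsum f l <= lsum g l.
Proof. induction l; simpl; intros H; [lra|]. pose proof (H a (or_introl eq_refl)). pose proof (IHl (fun x h => H x (or_intror h))). lra. Qed.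

Lemma lsum_nonneg {A} (f : A -> R) l : (forall x, In x l -> 0 <= f x) -> 0 <= lsum f l.
Proof. induction l; simpl; intros H; [lra|]. pose proof (H a (or_introl eq_refl)). pose proof (IHl (fun x h => H x (or_intror h))). lra. Qed.

Lemma lsum_plus {A} (f g : A -> R) l : lsum (fun x => f x + g x) l = lsum f l + lsum g l.
Proof. induction l; simpl; [lra| rewrite IHl; lra]. Qed.

Lemma lsum_scal {A} (c : R) (f : A -> R) l : lsum (fun x => c * f x) l = c * lsum f l.
Proof. induction l; simpl; [lra| rewrite IHl; lra]. Qed.

Lemma lsum_const {A} (c : R) (l : list A) : lsum (fun _ => c) l = INR (length l) * c.
Proof. induction l; simpl length; [simpl; lra|]. rewrite S_INR. simpl. rewrite IHl. lra. Qed.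

Lemma lsum_map {A B} (f : B -> R) (g : A -> B) l : lsum f (map g l) = lsum (fun x => f (g x)) l.
Proof. induction l; simpl; [lra| rewrite IHl; lra]. Qed.

Lemma lsum_flat_map {A B} (f : B -> R) (g : A -> list B) l :
  lsum f (flat_map g l) = lsum (fun x => lsum f (g x)) l.
Proof. induction l; simpl; [lra| rewrite lsum_app, IHl; lra]. Qed.

Lemma lsum_abs {A} (f : A -> R) l (M : R) : (forall x, In x l -> Rabs (f x) <= M) ->
  Rabs (lsum f l) <= INR (length l) * M.
Proof. induction l; simpl length; intros H.
 - simpl. rewrite Rabs_R0. lra.
 - rewrite S_INR. simpl. pose proof (H a (or_introl eq_refl)). pose proof (IHl (fun x h => H x (or_intror h))).
   pose proof (Rabs_triang (f a) (lsum f l)). lra. Qed.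

Lemma lsum_in_le {A} (f : A -> R) l x : (forall y, In y l -> 0 <= f y) -> In x l -> f x <= lsum f l.
Proof. induction l; simpl; intros H Hx; [contradiction|]. destruct Hx as [<-|Hx].
 - pose proof (lsum_nonneg f l (fun y h => H y (or_intror h))). lra.
 - pose proof (H a (or_introl eq_refl)). pose proof (IHl (fun y h => H y (or_intror h)) Hx). lra. Qed.

Fixpoint prodL (Ls : list (list Z)) : list Pt :=
  match Ls with
  | [] => [ [] ]
  | L :: Ls' => flat_map (fun z => map (cons z) (prodL Ls')) L
  end.

Definition zseq (c : Z) (n : nat) : list Z := map (fun k => (c + Z.of_nat k)%Z) (seq 0 n).

Lemma cube_prodL d l : cube d l = prodL (repeat (zseq (- Z.of_nat l) (2 * l + 1)) d).
Proof. induction d; simpl; [reflexivity|]. rewrite IHd. f_equal. unfold zseq.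
  apply map_ext. intros; lia. Qed.

Lemma zseq_add c a b : zseq c (a + b) = zseq c a ++ zseq (c + Z.of_nat a) b.
Proof. unfold zseq. rewrite seq_app, map_app. f_equal. simpl.
  assert (G: forall s n c, map (fun k => (c + Z.of_nat k)%Z) (seq s n) = map (fun k => (c + Z.of_nat s + Z.of_nat k)%Z) (seq 0 n)).
  { intros s n; revert s; induction n; intros s c0; simpl; [reflexivity|]. f_equal; [lia|].
    rewrite IHn. rewrite <- (seq_shift n 0), map_map. apply map_ext. intros; lia. }
  apply G. Qed.

Lemma In_prodL x Ls : In x (prodL Ls) <-> Forall2 (fun z L => In z L) x Ls.
Proof. revert x; induction Ls as [|L Ls IH]; intros x; simpl.
 - split. + intros [<-|[]]. constructor. + intros H; inversion H; auto.
 - rewrite in_flat_map. split.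
   + intros [z [Hz Hx]]. apply in_map_iff in Hx. destruct Hx as [y [<- Hy]]. constructor; auto. apply IH; auto.
   + intros H; inversion H; subst. exists x0; split; auto. apply in_map. apply IH; auto.
Qed.

Lemma length_prodL Ls : length (prodL Ls) = fold_right Nat.mul 1%nat (map (@length Z) Ls).
Proof. induction Ls as [|L Ls IH]; simpl; [reflexivity|].
  rewrite <- IH. generalize (prodL Ls). intros P.
  induction L; simpl; [reflexivity|]. rewrite length_app, length_map. f_equal. exact IHL. Qed.


Lemma NoDup_prodL Ls : Forall (@NoDup Z) Ls -> NoDup (prodL Ls).
Proof. induction Ls as [|L Ls IH]; simpl; intros H.
 - constructor; [simpl; tauto| constructor].
 - inversion H; subst. specialize (IH H3). clear H3 H. induction L as [|a L IHL]; simpl; [constructor|].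
   inversion H2; subst. apply NoDup_app.
   + apply NoDup_map_NoDup_ForallPairs; auto. intros x y _ _ E. inversion E; auto.
   + apply IHL; auto.
   + intros x Hx Hx'. apply in_map_iff in Hx. destruct Hx as [y [<- _]].
     apply in_flat_map in Hx'. destruct Hx' as [z [Hz Hy]]. apply in_map_iff in Hy.
     destruct Hy as [w [E _]]. inversion E; subst. tauto.
Qed.

Lemma NoDup_zseq c n : NoDup (zseq c n).
Proof. unfold zseq. apply NoDup_map_NoDup_ForallPairs; [|apply seq_NoDup].
  intros x y _ _ E. lia. Qed.

Lemma In_zseq z c n : In z (zseq c n) <-> (c <= z < c + Z.of_nat n)%Z.
Proof. unfold zseq. rewrite in_map_iff. split.
 - intros [k [<- Hk]]. apply in_seq in Hk. lia.
 - intros H. exists (Z.to_nat (z - c)). split; [lia|]. apply in_seq. lia. Qed.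

Lemma prodL_len x Ls : In x (prodL Ls) -> length x = length Ls.
Proof. intros H. apply In_prodL in H. eapply Forall2_length; eauto. Qed.

Lemma box_fund d tau cs : (1 <= tau)%nat -> length cs = d ->
  fund_domain d tau (prodL (map (fun c => zseq c tau) cs)).
Proof. intros Ht Hl. split; [|split].
 - apply NoDup_prodL. apply Forall_forall. intros L HL. apply in_map_iff in HL.
   destruct HL as [c [<- _]]. apply NoDup_zseq.
 - apply Forall_forall. intros x Hx. apply prodL_len in Hx. unfold is_pt. rewrite Hx, length_map; auto.
 - intros x Hx. unfold is_pt in Hx. subst d. revert x Hx. induction cs as [|c cs IH]; intros x Hx.
   + destruct x; [|discriminate]. exists []. split; [split; [simpl; auto| constructor]|].
     intros y [Hy _]. simpl in Hy. destruct Hy as [<-|[]]; auto.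
   + destruct x as [|a x]; [discriminate|]. simpl in Hx. injection Hx as Hx.
     destruct (IH x Hx) as [y [[Hy Hc] U]].
     set (Tz := Z.of_nat tau).
     exists ((c + (a - c) mod Tz)%Z :: y). split.
     * split.
       -- apply In_prodL. constructor.
          ++ apply In_zseq. pose proof (Z.mod_pos_bound (a - c) Tz). unfold Tz in *. lia.
          ++ apply In_prodL; auto.
       -- constructor; auto. exists ((a - c) / Tz)%Z. pose proof (Z.div_mod (a - c) Tz). unfold Tz in *. lia.
     * intros y' [Hy' Hc']. apply In_prodL in Hy'. inversion Hy'; subst. inversion Hc'; subst.
       rewrite <- (U l). 2: { split; auto. apply In_prodL; auto. }
       f_equal. apply In_zseq in H2. destruct H4 as [k Hk].
       pose proof (Z.mod_pos_bound (a - c) Tz). pose proof (Z.div_mod (a - c) Tz).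
       unfold Tz in *. set (q := ((a - c) / Z.of_nat tau)%Z) in *. set (r := ((a - c) mod Z.of_nat tau)%Z) in *.
       assert (k*Z.of_nat tau = q * Z.of_nat tau + c - x0 + r)%Z by lia.
       assert (k = q) by nia. subst. nia.
Qed.

Lemma lsum_prodL_cons (f : Pt -> R) L Ls :
  lsum f (prodL (L :: Ls)) = lsum (fun z => lsum (fun x => f (z :: x)) (prodL Ls)) L.
Proof. simpl. rewrite lsum_flat_map. apply lsum_ext_in. intros. apply lsum_map. Qed.

Lemma prodL_split (f : Pt -> R) Ls1 A B Ls2 :
  lsum f (prodL (Ls1 ++ (A ++ B) :: Ls2)) =
  lsum f (prodL (Ls1 ++ A :: Ls2)) + lsum f (prodL (Ls1 ++ B :: Ls2)).
Proof. revert f; induction Ls1 as [|L Ls1 IH]; intros f; simpl app.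
 - rewrite !lsum_prodL_cons, lsum_app. reflexivity.
 - rewrite !lsum_prodL_cons, <- lsum_plus. apply lsum_ext_in. intros. apply IH. Qed.

Lemma prodL_nil (f : Pt -> R) Ls1 Ls2 : lsum f (prodL (Ls1 ++ [] :: Ls2)) = 0.
Proof. revert f; induction Ls1 as [|L Ls1 IH]; intros f; simpl app.
 - reflexivity.
 - rewrite lsum_prodL_cons. transitivity (lsum (fun _ : Z => 0) L).
   + apply lsum_ext_in; intros; apply IH.
   + rewrite lsum_const; lra. Qed.

Lemma full_zero d mu tau h : (1 <= tau)%nat -> h_cond d mu tau h ->
  forall As cs, (length cs + length As)%nat = d ->
  lsum h (prodL (map (fun c => zseq c tau) cs ++ map (fun cq => zseq (fst cq) (snd cq * tau)) As)) = 0.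
Proof. intros Ht [_ Hh] As. induction As as [|[c q] As IH]; intros cs Hl.
 - rewrite app_nil_r. apply Hh. apply box_fund; auto. simpl in Hl; lia.
 - simpl in Hl. clear -Hl IH. revert c; induction q as [|q IHq]; intros c.
   + simpl. apply prodL_nil.
   + simpl map. simpl fst. simpl snd. replace (S q * tau)%nat with (tau + q * tau)%nat by lia.
     rewrite zseq_add, prodL_split.
     replace (map (fun c0 : Z => zseq c0 tau) cs ++ zseq c tau :: map (fun cq : Z * nat => zseq (fst cq) (snd cq * tau)) As)
       with (map (fun c0 : Z => zseq c0 tau) (cs ++ [c]) ++ map (fun cq : Z * nat => zseq (fst cq) (snd cq * tau)) As)
       by (rewrite map_app, <- app_assoc; reflexivity).
     rewrite IH. 2: { rewrite length_app. simpl in *. lia. }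
     simpl in IHq. rewrite IHq. lra.
Qed.

Lemma prod_le (ns : list nat) M : Forall (fun n => n <= M)%nat ns ->
  (fold_right Nat.mul 1 ns <= M ^ length ns)%nat.
Proof. induction 1; simpl; [lia|]. apply Nat.mul_le_mono; auto. Qed.

Lemma prod_app ns1 ns2 : fold_right Nat.mul 1%nat (ns1 ++ ns2) = (fold_right Nat.mul 1 ns1 * fold_right Nat.mul 1 ns2)%nat.
Proof. induction ns1; simpl; lia. Qed.

Lemma prod_le2 (ns1 ns2 : list nat) b M T : Forall (fun n => n <= M)%nat ns1 -> Forall (fun n => n <= M)%nat ns2 ->
  (b <= T)%nat -> (fold_right Nat.mul 1 (ns1 ++ b :: ns2) <= T * M ^ (length ns1 + length ns2))%nat.
Proof. intros H1 H2 Hb. rewrite prod_app. simpl. rewrite Nat.pow_add_r.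
  pose proof (prod_le _ _ H1). pose proof (prod_le _ _ H2).
  replace (T * (M ^ length ns1 * M ^ length ns2))%nat with (M ^ length ns1 * (T * M ^ length ns2))%nat by lia.
  apply Nat.mul_le_mono; auto. apply Nat.mul_le_mono; auto. Qed.

Definition fullbox (tau : nat) (cq : Z * nat) := zseq (fst cq) (snd cq * tau).
Definition ival (cn : Z * nat) := zseq (fst cn) (snd cn).

Lemma field_bound d mu tau h M : (1 <= tau)%nat -> h_cond d mu tau h ->
  forall Ls As, (length As + length Ls)%nat = d ->
  Forall (fun cq => snd cq * tau <= M)%nat As -> Forall (fun cn => snd cn <= M)%nat Ls ->
  Rabs (lsum h (prodL (map (fullbox tau) As ++ map ival Ls))) <= INR (length Ls) * mu * INR tau * INR M ^ (d - 1).
Proof. intros Ht Hh. induction Ls as [|[c n] Ls IH]; intros As Hl HA HL.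
 - rewrite app_nil_r. pose proof (full_zero d mu tau h Ht Hh As [] ltac:(simpl in *; lia)).
   simpl in H. unfold fullbox. rewrite H, Rabs_R0. simpl; lra.
 - assert (Hmu : 0 <= mu). { destruct Hh as [H1 _]. pose proof (H1 (repeat 0%Z d) (repeat_length _ _)).
     pose proof (Rabs_pos (h (repeat 0%Z d))). lra. }
   apply Forall_cons_iff in HL as [H1 H2]. simpl in H1.
   simpl map. unfold ival at 1. simpl fst; simpl snd.
   rewrite (Nat.div_mod_eq n tau). rewrite (Nat.mul_comm tau (n / tau)), zseq_add, prodL_split.
   replace (map (fullbox tau) As ++ zseq c (n / tau * tau) :: map ival Ls) with
     (map (fullbox tau) (As ++ [(c, (n / tau)%nat)]) ++ map ival Ls)
     by (rewrite map_app, <- app_assoc; reflexivity).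
   eapply Rle_trans; [apply Rabs_triang|].
   assert (IH' := IH (As ++ [(c, (n/tau)%nat)]) ltac:(rewrite length_app; simpl in *; lia)).
   assert (IH'' := IH' ltac:(apply Forall_app; split; auto; constructor; [simpl; pose proof (Nat.div_mod_eq n tau); nia| constructor]) H2).
   set (P := prodL _) at 2.
   assert (HP : Rabs (lsum h P) <= INR (length P) * mu).
   { apply lsum_abs. intros x Hx. destruct Hh as [Hh1 _]. apply Hh1. unfold is_pt.
     apply prodL_len in Hx. rewrite Hx, length_app. simpl. rewrite !length_map. simpl in Hl. lia. }
   assert (HlP : (length P <= tau * M ^ (d - 1))%nat).
   { unfold P. rewrite length_prodL, map_app. simpl map at 2.
     replace (d - 1)%nat with (length (map (@length Z) (map (fullbox tau) As)) + length (map (@length Z) (map ival Ls)))%nat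
       by (rewrite !length_map; simpl in Hl; lia).
     apply prod_le2.
     - apply Forall_forall. intros k Hk. rewrite map_map in Hk. apply in_map_iff in Hk. destruct Hk as [[c' q'] [<- Hin]].
       rewrite Forall_forall in HA. specialize (HA _ Hin). unfold fullbox, zseq. rewrite length_map, length_seq. auto.
     - apply Forall_forall. intros k Hk. rewrite map_map in Hk. apply in_map_iff in Hk. destruct Hk as [[c' q'] [<- Hin]].
       rewrite Forall_forall in H2. specialize (H2 _ Hin). unfold ival, zseq. rewrite length_map, length_seq. auto.
     - unfold zseq. rewrite length_map, length_seq. pose proof (Nat.mod_upper_bound n tau). lia. }
   apply le_INR in HlP. rewrite mult_INR, pow_INR in HlP.
   simpl length. rewrite S_INR.
   assert (INR (length P) * mu <= INR tau * INR M ^ (d - 1) * mu) by (apply Rmult_le_compat_r; auto).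
   nra.
Qed.

Lemma sup_R_ge (S : R -> Prop) x : bound S -> S x -> x <= sup_R S.
Proof. intros Hb Hx. unfold sup_R. destruct excluded_middle_informative as [H|H].
 - apply (proj1 (proj2_sig (completeness S (proj1 H) (proj2 H)))); auto.
 - exfalso; apply H; split; eauto. Qed.

Lemma sup_R_le (S : R -> Prop) B : 0 <= B -> (forall x, S x -> x <= B) -> sup_R S <= B.
Proof. intros H0 HB. unfold sup_R. destruct excluded_middle_informative as [H|H]; auto.
 apply (proj2 (proj2_sig (completeness S (proj1 H) (proj2 H)))). intros x Hx; auto. Qed.

Lemma field_cube d mu tau h l : (1 <= tau)%nat -> h_cond d mu tau h ->
  Rabs (lsum h (cube d l)) <= INR d * mu * INR tau * INR (2 * l + 1) ^ (d - 1).
Proof. intros Ht Hh. rewrite cube_prodL.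
  pose proof (field_bound d mu tau h (2 * l + 1) Ht Hh (repeat (- Z.of_nat l, (2*l+1)%nat)%Z d) []) as H.
  rewrite repeat_length in H. change (map (fullbox tau) [] ++ ?x) with x in H. change (length (@nil (Z*nat))) with 0%nat in H. specialize (H ltac:(lia) ltac:(constructor)).
  replace (map ival (repeat (- Z.of_nat l, (2 * l + 1)%nat)%Z d)) with (repeat (zseq (- Z.of_nat l) (2 * l + 1)) d) in H.
  - apply H. apply Forall_forall. intros x Hx. apply repeat_spec in Hx. subst. simpl. lia.
  - rewrite map_repeat. reflexivity.
Qed.

Lemma norminf_nonneg x : (0 <= norminf x)%Z.
Proof. induction x; simpl; lia. Qed.

Lemma norminf_triang j i : length j = length i -> (norminf j <= norminf (vsub j i) + norminf i)%Z.
Proof. revert i; induction j as [|a j IH]; intros [|b i] Hl; simpl in *; try lia.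
  pose proof (IH i ltac:(lia)). unfold vsub in *. simpl. pose proof (norminf_nonneg i). pose proof (norminf_nonneg (map (fun p : Z * Z => (fst p - snd p)%Z) (combine j i))). lia. Qed.

Lemma norminf_attained x : x <> [] -> exists z, In z x /\ norminf x = Z.abs z.
Proof. induction x as [|a x IH]; intros H; [congruence|]. destruct x as [|b x].
 - exists a. simpl. split; auto. lia.
 - destruct (IH ltac:(discriminate)) as [z [Hz E]]. simpl norminf in *.
   destruct (Z.le_ge_cases (Z.abs a) (norminf (b :: x))).
   + exists z. split; [right; auto|]. simpl norminf in *. lia.
   + exists a. split; [left; auto|]. simpl norminf in *. lia. Qed.

Lemma norminf_le_iff x n : (norminf x <= n)%Z <-> (0 <= n)%Z /\ Forall (fun z => Z.abs z <= n)%Z x.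
Proof. induction x as [|a x IH]; simpl.
 - split; [intros; split; auto; lia| intros [? ?]; lia].
 - rewrite Forall_cons_iff. pose proof (norminf_nonneg x). split.
   + intros Hn. assert (Hx: (norminf x <= n)%Z) by lia. apply IH in Hx. intuition lia.
   + intros [H0 [H1 H2]]. assert ((norminf x <= n)%Z) by (apply IH; auto). lia.
Qed.

Lemma In_cube x d l : In x (cube d l) <-> length x = d /\ (norminf x <= Z.of_nat l)%Z.
Proof. rewrite cube_prodL, In_prodL, norminf_le_iff. split.
 - intros H. split. + apply Forall2_length in H. rewrite repeat_length in H; auto.
   + split; [lia|]. revert H. generalize d. induction x; intros d' H; [constructor|].
     destruct d'; inversion H; subst. constructor; eauto. apply In_zseq in H3. lia.
 - intros [<- [_ H]]. induction x; simpl; constructor; inversion H; subst; auto.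
   apply In_zseq. lia. Qed.

Definition eqPt := list_eq_dec Z.eq_dec.

Lemma lsum_filter {A} (f : A -> R) (b : A -> bool) l :
  lsum f (filter b l) = lsum (fun x => if b x then f x else 0) l.
Proof. induction l; simpl; [reflexivity|]. destruct (b a); simpl; rewrite IHl; lra. Qed.

Lemma lsum_indicator (x : Pt) (c : R) G : NoDup G ->
  lsum (fun i => if eqPt x i then c else 0) G = if in_dec eqPt x G then c else 0.
Proof. induction 1.
  - simpl. destruct (in_dec eqPt x []) as [[]|]; reflexivity.
  - change (lsum (fun i => if eqPt x i then c else 0) (x0 :: l)) with
      ((if eqPt x x0 then c else 0) + lsum (fun i => if eqPt x i then c else 0) l).
    rewrite IHNoDup.
    destruct (in_dec eqPt x (x0 :: l)) as [Hin|Hin];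
    destruct (eqPt x x0); destruct (in_dec eqPt x l); subst; try lra.
    all: exfalso; simpl in Hin; firstorder congruence.
Qed.

Lemma lsum_filter_cons {A} (g : A -> R) b a L : lsum g (filter b (a :: L)) = (if b a then g a else 0) + lsum g (filter b L).
Proof. simpl. destruct (b a); simpl; lra. Qed.

Lemma group (g : Pt * Pt -> R) G L : NoDup G ->
  (forall p, In p L -> ~ In (fst p) G -> g p = 0) ->
  lsum g L = lsum (fun i => lsum g (filter (fun p => if eqPt (fst p) i then true else false) L)) G.
Proof. intros HG. induction L as [|a L IH]; intros H.
 - simpl. rewrite lsum_const. lra.
 - transitivity (lsum (fun i => (if eqPt (fst a) i then g a else 0) +
      lsum g (filter (fun p => if eqPt (fst p) i then true else false) L)) G).
   + rewrite lsum_plus, lsum_indicator by auto. rewrite <- IH by (intros; apply H; simpl; auto).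
     simpl. destruct (in_dec eqPt (fst a) G); [lra|]. rewrite H by (simpl; auto). lra.
   + apply lsum_ext_in. intros i _. rewrite lsum_filter_cons.
     f_equal. unfold Pt in *. destruct (eqPt (fst a) i); reflexivity.
Qed.

Definition setj d (i : Pt) (m : nat) := fun j => is_pt d j /\ (Z.of_nat m <= norminf (vsub j i))%Z.

Lemma nnsum_le_Lam d lam Lam J i m : J_cond d lam Lam J -> 0 <= Lam -> is_pt d i ->
  nnsum (setj d i m) (J i) <= Lam.
Proof. intros HJ HL Hi. apply sup_R_le; auto. intros x [K [HK [HF ->]]].
  destruct HJ as (_&_&_&_&H4). apply H4; auto. eapply Forall_impl; [|exact HF]. intros a [? ?]; auto. Qed.

Lemma lsum_le_sigma d lam Lam J i m K : J_cond d lam Lam J -> 0 <= Lam -> is_pt d i ->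
  NoDup K -> Forall (setj d i m) K -> lsum (J i) K <= sigmaJ d J m.
Proof. intros HJ HL Hi HK HF.
  apply Rle_trans with (nnsum (setj d i m) (J i)).
  - apply sup_R_ge.
    + exists Lam. intros x [K' [HK' [HF' ->]]]. destruct HJ as (_&_&_&_&H4). apply H4; auto.
      eapply Forall_impl; [|exact HF']. intros a [? ?]; auto.
    + exists K; auto.
  - apply sup_R_ge.
    + exists Lam. intros x [i' [Hi' ->]]. eapply nnsum_le_Lam; eauto.
    + exists i; split; auto.
Qed.

Lemma sigma_nonneg d lam Lam J m : J_cond d lam Lam J -> 0 <= Lam -> 0 <= sigmaJ d J m.
Proof. intros HJ HL. pose proof (lsum_le_sigma d lam Lam J (repeat 0%Z d) m [] HJ HL (repeat_length _ _)
   (NoDup_nil _) (Forall_nil _)). simpl in H. auto. Qed.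

Definition g1 (J : Pt -> Pt -> R) (l : nat) (p : Pt * Pt) : R :=
  if Z.leb (norminf (fst p)) (Z.of_nat l) then
    (if Z.leb (norminf (snd p)) (Z.of_nat l) then 0 else 2 * J (fst p) (snd p)) else 0.

Definition mi (l : nat) (i : Pt) : nat := Z.to_nat (Z.of_nat l + 1 - norminf i).

Lemma NoDup_cube d l : NoDup (cube d l).
Proof. rewrite cube_prodL. apply NoDup_prodL. apply Forall_forall. intros x Hx.
  apply repeat_spec in Hx; subst; apply NoDup_zseq. Qed.

Lemma g1_bound d lam Lam J l L : J_cond d lam Lam J -> 0 <= Lam ->
  NoDup L -> Forall (fun p => is_pt d (fst p) /\ is_pt d (snd p)) L ->
  lsum (g1 J l) L <= 2 * lsum (fun i => sigmaJ d J (mi l i)) (cube d l).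
Proof. intros HJ HL HN HF. rewrite Forall_forall in HF.
  rewrite (group _ (cube d l)).
  2: apply NoDup_cube.
  2: { intros p Hp Hn. unfold g1. destruct (Z.leb_spec (norminf (fst p)) (Z.of_nat l)); auto.
       exfalso. apply Hn. apply In_cube. split; auto. apply HF; auto. }
  rewrite <- lsum_scal. apply lsum_le_in. intros i Hi. apply In_cube in Hi. destruct Hi as [Hi1 Hi2].
  match goal with |- context [filter ?b L] => set (Li := filter b L) end.
  assert (Hfst : forall p, In p Li -> fst p = i).
  { intros p Hp. apply filter_In in Hp. destruct Hp as [_ Hp]. destruct (eqPt (fst p) i); auto; discriminate. }
  assert (HLi : forall p, In p Li -> In p L). { intros p Hp. apply filter_In in Hp; tauto. }
  transitivity (lsum (fun j => if Z.leb (norminf j) (Z.of_nat l) then 0 else 2 * J i j) (map snd Li)).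
  { rewrite lsum_map. apply Req_le. apply lsum_ext_in. intros [a b] Hp. unfold g1. pose proof (Hfst _ Hp) as Ha. simpl in Ha |- *. subst a.
    destruct (Z.leb_spec (norminf i) (Z.of_nat l)); [reflexivity| lia]. }
  set (K := filter (fun j => negb (Z.leb (norminf j) (Z.of_nat l))) (map snd Li)).
  transitivity (2 * lsum (J i) K).
  { unfold K. rewrite lsum_filter, <- lsum_scal. apply Req_le, lsum_ext_in. intros j _.
    destruct (Z.leb _ _); simpl; lra. }
  apply Rmult_le_compat_l; [lra|].
  apply lsum_le_sigma with lam Lam; auto.
  - unfold K. apply NoDup_filter. apply NoDup_map_NoDup_ForallPairs.
    + intros x y Hx Hy E. rewrite (surjective_pairing x), (surjective_pairing y), E, (Hfst x Hx), (Hfst y Hy). reflexivity.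
    + apply NoDup_filter; auto.
  - apply Forall_forall. intros j Hj. unfold K in Hj. apply filter_In in Hj. destruct Hj as [Hj Hout].
    apply in_map_iff in Hj. destruct Hj as [p [<- Hp]]. destruct (HF p (HLi p Hp)) as [Hp1 Hp2].
    split; auto. apply Bool.negb_true_iff, Z.leb_gt in Hout.
    pose proof (norminf_triang (snd p) i ltac:(unfold Pt, is_pt in *; lia)). unfold mi. rewrite Z2Nat.id by lia. lia.
Qed.

Lemma lsum_coord (sf : Z -> R) I d :
  lsum (fun x => lsum sf x) (prodL (repeat I d)) = INR d * INR (length I) ^ (d - 1) * lsum sf I.
Proof. induction d as [|d IH].
 - simpl. lra.
 - simpl repeat. rewrite lsum_prodL_cons.
   transitivity (lsum (fun z => INR (length (prodL (repeat I d))) * sf z + lsum (fun x => lsum sf x) (prodL (repeat I d))) I).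
   + apply lsum_ext_in. intros z _. change (fun x => lsum sf (z :: x)) with (fun x => sf z + lsum sf x).
     rewrite lsum_plus, lsum_const. reflexivity.
   + rewrite lsum_plus, lsum_scal, lsum_const, IH, length_prodL.
     replace (fold_right Nat.mul 1%nat (map (length (A:=Z)) (repeat I d))) with (length I ^ d)%nat.
     2: { clear. induction d; simpl; auto. }
     rewrite pow_INR. destruct d as [|d].
     * simpl. lra.
     * replace (S (S d) - 1)%nat with (S d) by lia. replace (S d - 1)%nat with d by lia.
       rewrite !S_INR. simpl. lra.
Qed.

Lemma lsum_rev_seq (g : nat -> R) n :
  lsum (fun k => g (n - k)%nat) (seq 0 (S n)) = lsum g (seq 0 (S n)).
Proof. revert g; induction n as [|n IH]; intros g.
 - simpl. lra.
 - rewrite seq_S, lsum_app. simpl (0 + S n)%nat.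
   transitivity (lsum (fun k => g (S (n - k))%nat) (seq 0 (S n)) + g 0%nat).
   + f_equal. * apply lsum_ext_in. intros k Hk. apply in_seq in Hk. f_equal. lia.
     * simpl. rewrite Nat.sub_diag. lra.
   + rewrite (IH (fun k => g (S k))). replace (seq 0 (S n) ++ [S n]) with (seq 0 (S (S n))) by (rewrite (seq_S (S n)); reflexivity).
     change (seq 0 (S (S n))) with (0%nat :: seq 1 (S n)). rewrite <- seq_shift.
     change (lsum g (0%nat :: map S (seq 0 (S n)))) with (g 0%nat + lsum g (map S (seq 0 (S n)))).
     rewrite lsum_map. lra.
Qed.

Lemma sum_lsum (g : nat -> R) n : sum_f_R0 g n = lsum g (seq 0 (S n)).
Proof. induction n; [simpl; lra|]. simpl sum_f_R0. rewrite IHn. rewrite (seq_S (S n)), lsum_app. simpl. lra. Qed.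

Lemma lsum_I (sg : nat -> R) l : (forall m, 0 <= sg m) ->
  lsum (fun z => sg (Z.to_nat (Z.of_nat l + 1 - Z.abs z))) (zseq (- Z.of_nat l) (2 * l + 1))
  <= 2 * sum_f_R0 (fun k => sg (S k)) l.
Proof. intros Hs. replace (2 * l + 1)%nat with (l + S l)%nat by lia. rewrite zseq_add, lsum_app.
  replace (- Z.of_nat l + Z.of_nat l)%Z with 0%Z by lia. rewrite sum_lsum.
  assert (H1 : lsum (fun z => sg (Z.to_nat (Z.of_nat l + 1 - Z.abs z))) (zseq (- Z.of_nat l) l)
     <= lsum (fun k => sg (S k)) (seq 0 (S l))).
  { unfold zseq. rewrite lsum_map. rewrite seq_S, lsum_app.
    assert (0 <= lsum (fun k => sg (S k)) [(0 + l)%nat]) by (simpl; pose proof (Hs (S l)); lra).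
    assert (lsum (fun x => sg (Z.to_nat (Z.of_nat l + 1 - Z.abs (- Z.of_nat l + Z.of_nat x)))) (seq 0 l) =
            lsum (fun k => sg (S k)) (seq 0 l)).
    { apply lsum_ext_in. intros k Hk. apply in_seq in Hk. f_equal. lia. }
    lra. }
  assert (H2 : lsum (fun z => sg (Z.to_nat (Z.of_nat l + 1 - Z.abs z))) (zseq 0 (S l))
     = lsum (fun k => sg (S k)) (seq 0 (S l))).
  { unfold zseq. rewrite lsum_map. rewrite <- (lsum_rev_seq (fun k => sg (S k))).
    apply lsum_ext_in. intros k Hk. apply in_seq in Hk. f_equal. lia. }
  lra.
Qed.

Definition swap (p : Pt * Pt) : Pt * Pt := (snd p, fst p).

Lemma pair_bound d lam Lam J l : J_cond d lam Lam J -> 0 <= Lam ->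
  nnsum (fun p : Pt * Pt => is_pt d (fst p) /\ is_pt d (snd p) /\ (In (fst p) (cube d l) \/ In (snd p) (cube d l)))
        (fun p => J (fst p) (snd p) * (1 - psi l (fst p) * psi l (snd p)))
  <= 4 * lsum (fun i => sigmaJ d J (mi l i)) (cube d l).
Proof. intros HJ HL. apply sup_R_le.
 - apply Rmult_le_pos; [lra|]. apply lsum_nonneg. intros; eapply sigma_nonneg; eauto.
 - intros x [L [HN [HF ->]]]. rewrite Forall_forall in HF.
   transitivity (lsum (g1 J l) L + lsum (g1 J l) (map swap L)).
   + rewrite lsum_map, <- lsum_plus. apply Req_le, lsum_ext_in. intros [a b] Hp.
     destruct (HF _ Hp) as (Ha & Hb & _). simpl in Ha, Hb.
     destruct HJ as (_&HJ1&_). unfold g1, psi, swap; simpl. rewrite (HJ1 b a Hb Ha).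
     destruct (Z.leb (norminf a) (Z.of_nat l)); destruct (Z.leb (norminf b) (Z.of_nat l)); lra.
   + assert (H1 := g1_bound d lam Lam J l L HJ HL HN ltac:(apply Forall_forall; intros p Hp; destruct (HF p Hp) as (?&?&?); auto)).
     assert (H2 := g1_bound d lam Lam J l (map swap L) HJ HL).
     assert (H2' : lsum (g1 J l) (map swap L) <= 2 * lsum (fun i => sigmaJ d J (mi l i)) (cube d l)).
     { apply H2.
       - apply NoDup_map_NoDup_ForallPairs; auto. intros [a b] [c e] _ _ E. unfold swap in E; simpl in E.
         inversion E; auto.
       - apply Forall_forall. intros p Hp. apply in_map_iff in Hp. destruct Hp as [q [<- Hq]].
         destruct (HF q Hq) as (?&?&?). unfold swap; simpl; auto. }
     lra.
Qed.

Lemma field_term d mu tau h l : (1 <= tau)%nat -> h_cond d mu tau h ->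
  lsum (fun i => h i * psi l i) (cube d l) <= INR d * mu * INR tau * INR (2 * l + 1) ^ (d - 1).
Proof. intros Ht Hh.
  transitivity (- lsum h (cube d l)).
  - apply Req_le. replace (- lsum h (cube d l)) with ((-1) * lsum h (cube d l)) by ring. rewrite <- lsum_scal.
    apply lsum_ext_in. intros i Hi. apply In_cube in Hi. unfold psi.
    destruct (Z.leb_spec (norminf i) (Z.of_nat l)); [lra| lia].
  - pose proof (field_cube d mu tau h l Ht Hh). pose proof (Rabs_Ropp (lsum h (cube d l))); pose proof (RRle_abs (- lsum h (cube d l))). lra.
Qed.

Lemma sigma_sum d lam Lam J l : (1 <= d)%nat -> J_cond d lam Lam J -> 0 <= Lam ->
  lsum (fun i => sigmaJ d J (mi l i)) (cube d l)
  <= INR d * INR (2 * l + 1) ^ (d - 1) * (2 * sum_f_R0 (fun k => sigmaJ d J (S k)) l).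
Proof. intros Hd HJ HL.
  set (sf := fun z => sigmaJ d J (Z.to_nat (Z.of_nat l + 1 - Z.abs z))).
  assert (Hsf : forall z, 0 <= sf z) by (intros; eapply sigma_nonneg; eauto).
  transitivity (lsum (fun x => lsum sf x) (cube d l)).
  - apply lsum_le_in. intros i Hi. apply In_cube in Hi. destruct Hi as [Hi1 _].
    destruct (norminf_attained i) as [z [Hz E]]. { intros ->. simpl in Hi1. lia. }
    unfold mi. rewrite E. apply (lsum_in_le sf i z); auto.
  - rewrite cube_prodL, lsum_coord. unfold zseq at 1. rewrite length_map, length_seq.
    apply Rmult_le_compat_l.
    + apply Rmult_le_pos; [apply pos_INR| apply pow_le, pos_INR].
    + apply lsum_I. intros; eapply sigma_nonneg; eauto.
Qed.

Theorem mainTheorem7 :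
  forall (d : nat) (mu : R) (tau : nat),
    (2 <= d)%nat -> 0 < mu -> (1 <= tau)%nat ->
    exists C : R, 1 <= C /\
      forall (lam Lam : R) (J : Pt -> Pt -> R) (h : Pt -> R),
        0 < lam -> lam <= Lam ->
        J_cond d lam Lam J -> h_cond d mu tau h ->
        forall l : nat, (1 <= l)%nat ->
          Ham d J h (cube d l) (psi l)
            <= C * INR l ^ (d - 1)%nat * (1 + sum_f_R0 (fun k => sigmaJ d J (S k)) l).
Proof.
  intros d mu tau Hd Hmu Ht.
  assert (Hd' : 2 <= INR d) by (replace 2 with (INR 2) by (simpl; lra); apply le_INR; auto).
  assert (Ht' : 1 <= INR tau) by (replace 1 with (INR 1) by (simpl; lra); apply le_INR; auto).
  assert (H3 : 1 <= 3 ^ (d - 1)) by (apply pow_R1_Rle; lra).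
  exists (3 ^ (d - 1) * INR d * (8 + mu * INR tau)). split.
  { assert (0 <= mu * INR tau) by (apply Rmult_le_pos; lra).
    assert (1 <= INR d * (8 + mu * INR tau)) by nra. nra. }
  intros lam Lam J h Hlam HlL HJ Hh l Hl.
  assert (HL : 0 <= Lam) by lra.
  set (Sg := sum_f_R0 (fun k => sigmaJ d J (S k)) l).
  assert (HSg : 0 <= Sg).
  { unfold Sg. rewrite sum_lsum. apply lsum_nonneg. intros; eapply sigma_nonneg; eauto. }
  set (P := INR (2 * l + 1) ^ (d - 1)).
  assert (HP0 : 0 <= P) by (apply pow_le, pos_INR).
  assert (HPQ : P <= 3 ^ (d - 1) * INR l ^ (d - 1)).
  { unfold P. rewrite <- Rpow_mult_distr. apply pow_incr. split; [apply pos_INR|].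
    replace 3 with (INR 3) by (simpl; lra). rewrite <- mult_INR. apply le_INR. lia. }
  pose proof (pair_bound d lam Lam J l HJ HL) as H1.
  pose proof (field_term d mu tau h l Ht Hh) as H2.
  pose proof (sigma_sum d lam Lam J l ltac:(lia) HJ HL) as H4.
  fold Sg in H4. fold P in H2, H4.
  unfold Ham.
  assert (Ham_le : Ham d J h (cube d l) (psi l) <= INR d * P * (8 * Sg + mu * INR tau)).
  { unfold Ham. nra. }
  unfold Ham in Ham_le.
  assert (0 <= mu * INR tau) by (apply Rmult_le_pos; lra).
  assert (INR d * P * (8 * Sg + mu * INR tau) <= INR d * P * ((8 + mu * INR tau) * (1 + Sg))).
  { apply Rmult_le_compat_l; [apply Rmult_le_pos; lra|]. nra. }
  assert (INR d * P * ((8 + mu * INR tau) * (1 + Sg)) <= INR d * (3 ^ (d - 1) * INR l ^ (d - 1)) * ((8 + mu * INR tau) * (1 + Sg))).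
  { apply Rmult_le_compat_r; [nra|]. apply Rmult_le_compat_l; lra. }
  nra.
Qed.
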